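(* Let $X$ be a well-filtered space. The following conditions are equivalent: (1) $X$ is locally compact. (2) $\mathsf{K}(X)$ is a continuous semilattice, and the upper Vietoris topology and the Scott topology on $\mathsf{K}(X)$ coincide. (3) $\mathsf{K}(X)$ is a continuous semilattice, and the map $\xi_X^\sigma : X \to \Sigma\,\mathsf{K}(X)$, $x\mapsto \uparrow x$, is continuous. (4) $\mathsf{K}(X)$ is a continuous semilattice, and $X$ has property Q. (5) $X$ is core compact.
   Context: All spaces are $T_0$. The specialization order of a space $X$ is $x\le y$ iff $x\in\overline{\{y\}}$; $\uparrow x=\{y: x\le y\}$; a set is saturated iff it is an upper set in this order. $\mathsf{K}(X)$ denotes the set of all nonempty compact saturated subsets of $X$, ordered by reverse inclusion ($K_1\sqsubseteq K_2$ iff $K_2\subseteq K_1$); in this order, binary meets are unions, so $\mathsf{K}(X)$ is a semilattice, and a family $\{K_i\}$ has a supremum iff $\bigcap_i K_i\in\mathsf{K}(X)$, in which case the supremum is that intersection. For a poset $Q$, a subset $U$ is Scott open if it is an upper set and for every directed $D\subseteq Q$ whose supremum exists and lies in $U$, $D\cap U\neq\emptyset$; these sets form the Scott topology $\sigma(Q)$, and $\Sigma Q=(Q,\sigma(Q))$. In a poset, $a\ll b$ ($a$ way below $b$) means: for every directed $D$ whose supremum exists and $\bigvee D\ge b$, some $d\in D$ satisfies $d\ge a$. A poset is continuous if it is directed complete and for every $x$ the set $\{u: u\ll x\}$ is directed with supremum $x$; ''$\mathsf{K}(X)$ is a continuous semilattice'' means $\mathsf{K}(X)$ (with the order above) is continuous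 in this sense. For an open set $U$ of $X$, $\Box U=\{K\in\mathsf{K}(X): K\subseteq U\}$; the upper Vietoris topology on $\mathsf{K}(X)$ is the topology with base $\{\Box U: U \text{ open in } X\}$. A $T_0$ space $X$ is well-filtered if for every open $U$ and every family $\mathcal{K}\subseteq \mathsf{K}(X)$ directed with respect to $\sqsubseteq$ (i.e. filtered under inclusion), $\bigcap\mathcal K\subseteq U$ implies $K\subseteq U$ for some $K\in\mathcal K$. $X$ has property Q if for all $K_1,K_2\in\mathsf{K}(X)$: $K_1\ll K_2$ in $\mathsf{K}(X)$ iff $K_2\subseteq \operatorname{int}K_1$. $X$ is locally compact if every point has a neighborhood base consisting of compact sets; $X$ is core compact if its lattice of open sets $\mathcal O(X)$ is a continuous lattice. *)

(* Defs.v *)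
From Stdlib Require Import List.

Set Implicit Arguments.

Definition subset {A : Type} (S T : A -> Prop) : Prop := forall a, S a -> T a.

Section Order.
Variables (P : Type) (le : P -> P -> Prop).

Definition upper_bound (D : P -> Prop) (s : P) : Prop := forall d, D d -> le d s.
Definition is_sup (D : P -> Prop) (s : P) : Prop :=
  upper_bound D s /\ forall t, upper_bound D t -> le s t.
Definition directed (D : P -> Prop) : Prop :=
  (exists d, D d) /\
  forall a b, D a -> D b -> exists c, D c /\ le a c /\ le b c.
Definition upper_set (U : P -> Prop) : Prop := forall x y, U x -> le x y -> U y.
Definition scott_open (U : P -> Prop) : Prop :=
  upper_set U /\
  forall D s, directed D -> is_sup D s -> U s -> exists d, D d /\ U d.
Definition way_below (a b : P) : Prop :=
  forall D s, directed D -> is_sup D s -> le b s -> exists d, D d /\ le a d.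
Definition directed_complete : Prop :=
  forall D, directed D -> exists s, is_sup D s.
Definition continuous_poset : Prop :=
  directed_complete /\
  forall x, directed (fun u => way_below u x) /\ is_sup (fun u => way_below u x) x.
End Order.

Section Topology.
Variables (X : Type) (O : (X -> Prop) -> Prop).

Definition is_topology : Prop :=
  O (fun _ => True) /\
  (forall F : (X -> Prop) -> Prop, (forall U, F U -> O U) ->
     O (fun x => exists U, F U /\ U x)) /\
  (forall U V, O U -> O V -> O (fun x => U x /\ V x)).

Definition closed (C : X -> Prop) : Prop := O (fun x => ~ C x).
Definition closure (A : X -> Prop) (x : X) : Prop :=
  forall C, closed C -> subset A C -> C x.
Definition interior (A : X -> Prop) (x : X) : Prop :=
  exists U, O U /\ subset U A /\ U x.

Definition T0 : Prop :=
  forall x y, (forall U, O U -> (U x <-> U y)) -> x = y.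

Definition spec_le (x y : X) : Prop := closure (fun z => z = y) x.
Definition upset (x : X) : X -> Prop := fun y => spec_le x y.
Definition saturated (A : X -> Prop) : Prop := forall x y, A x -> spec_le x y -> A y.

Definition compact (K : X -> Prop) : Prop :=
  forall F : (X -> Prop) -> Prop,
    (forall U, F U -> O U) -> subset K (fun x => exists U, F U /\ U x) ->
    exists l : list (X -> Prop),
      (forall U, In U l -> F U) /\ subset K (fun x => exists U, In U l /\ U x).

Definition in_KX (K : X -> Prop) : Prop :=
  (exists x, K x) /\ compact K /\ saturated K.

Definition KX : Type := { K : X -> Prop | in_KX K }.
Definition Kset (K : KX) : X -> Prop := proj1_sig K.

Definition Kle (K1 K2 : KX) : Prop := subset (Kset K2) (Kset K1).

Definition Box (U : X -> Prop) : KX -> Prop := fun K => subset (Kset K) U.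
Definition upper_vietoris_open (V : KX -> Prop) : Prop :=
  exists F : (X -> Prop) -> Prop,
    (forall U, F U -> O U) /\
    forall K, V K <-> exists U, F U /\ Box U K.

Definition well_filtered : Prop :=
  forall (U : X -> Prop) (Kf : KX -> Prop),
    O U -> directed Kle Kf ->
    subset (fun x => forall K, Kf K -> Kset K x) U ->
    exists K, Kf K /\ subset (Kset K) U.

Definition property_Q : Prop :=
  forall K1 K2 : KX, way_below Kle K1 K2 <-> subset (Kset K2) (interior (Kset K1)).

Definition locally_compact : Prop :=
  forall x U, O U -> U x ->
    exists N, compact N /\ interior N x /\ subset N U.

Definition OX : Type := { U : X -> Prop | O U }.
Definition OXle (U V : OX) : Prop := subset (proj1_sig U) (proj1_sig V).
Definition core_compact : Prop := continuous_poset OXle.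

(* the map xi : X -> Sigma K(X), x |-> upset x, is continuous:
   preimages of Scott open sets are open *)
Definition xi_continuous : Prop :=
  forall V : KX -> Prop, scott_open Kle V ->
    O (fun x => exists K : KX, (forall y, Kset K y <-> upset x y) /\ V K).

End Topology.

(* Main.v *)
Require Import Defs.
From Stdlib Require Import List.
From Stdlib Require Import Classical ClassicalEpsilon FunctionalExtensionality PropExtensionality Lia PeanoNat.

Lemma set_ext {T : Type} (A B : T -> Prop) : subset A B -> subset B A -> A = B.
Proof. intros H1 H2. extensionality x. apply propositional_extensionality. split; auto. Qed.

Section OrderLemmas.
Variables (P : Type) (le : P -> P -> Prop).
Hypothesis le_refl : forall a, le a a.
Hypothesis le_trans : forall a b c, le a b -> le b c -> le a c.

Lemma wb_le a b : way_below le a b -> le a b.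
Proof.
  intros H. destruct (H (fun d => d = b) b) as [d [Hd Had]].
  - split. exists b; auto. intros x y -> ->. exists b; auto.
  - split. intros d ->; auto. intros t Ht. apply Ht; auto.
  - auto.
  - subst; auto.
Qed.

Lemma wb_mono a a' b b' : le a a' -> way_below le a' b -> le b b' -> way_below le a b'.
Proof.
  intros H1 H2 H3 D s HD Hs Hb. destruct (H2 D s HD Hs) as [d [Hd Hd']].
  eapply le_trans; eauto. exists d; split; eauto.
Qed.

Lemma directed_ext (D D' : P -> Prop) : (forall u, D u <-> D' u) -> directed le D -> directed le D'.
Proof.
  intros E [[d Hd] H]. split. exists d; apply E; auto.
  intros a b Ha Hb. destruct (H a b) as [c [Hc [? ?]]]; try apply E; auto.
  exists c; split; auto; apply E; auto.
Qed.

Lemma is_sup_ext (D D' : P -> Prop) s : (forall u, D u <-> D' u) -> is_sup le D s -> is_sup le D' s.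
Proof.
  intros E [H1 H2]. split. intros d Hd; apply H1, E; auto.
  intros t Ht; apply H2; intros d Hd; apply Ht, E; auto.
Qed.

Lemma dir_list (D : P -> Prop) : directed le D -> forall l, (forall a, In a l -> D a) ->
  exists c, D c /\ forall a, In a l -> le a c.
Proof.
  intros [[d0 Hd0] Hdir] l. induction l as [|a l IH]; intros Hl.
  - exists d0; split; auto. intros a [].
  - destruct IH as [c [Hc Hc']]. intros b Hb; apply Hl; right; auto.
    destruct (Hdir a c) as [e [He [Hae Hce]]]; auto. apply Hl; left; auto.
    exists e; split; auto. intros b [<-|Hb]; auto. eapply le_trans; eauto.
Qed.

Lemma interpolation : continuous_poset le -> forall a b, way_below le a b ->
  exists m, way_below le a m /\ way_below le m b.
Proof.
  intros [Hdc Hc] a b Hab.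
  set (D := fun u => exists v, way_below le u v /\ way_below le v b).
  assert (HD : directed le D).
  { split.
    - destruct (Hc b) as [[[v Hv] _] _]. destruct (Hc v) as [[[u Hu] _] _].
      exists u, v; auto.
    - intros u1 u2 [v1 [H11 H12]] [v2 [H21 H22]].
      destruct (proj2 (proj1 (Hc b)) v1 v2 H12 H22) as [v3 [Hv3 [Hl1 Hl2]]].
      assert (W1 : way_below le u1 v3) by (eapply wb_mono; eauto).
      assert (W2 : way_below le u2 v3) by (eapply wb_mono; eauto).
      destruct (proj2 (proj1 (Hc v3)) u1 u2 W1 W2) as [u3 [Hu3 [? ?]]].
      exists u3; split; auto. exists v3; auto. }
  assert (Hs : is_sup le D b).
  { split.
    - intros u [v [H1 H2]]. eapply le_trans; apply wb_le; eauto.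
    - intros t Ht. apply (proj2 (proj2 (Hc b))). intros v Hv.
      apply (proj2 (proj2 (Hc v))). intros u Hu. apply Ht. exists v; auto. }
  destruct (Hab D b HD Hs (le_refl b)) as [d [[v [Hdv Hvb]] Had]].
  exists v; split; auto. eapply wb_mono; eauto.
Qed.

Lemma wb_scott_open : continuous_poset le -> forall a, scott_open le (way_below le a).
Proof.
  intros Hc a. split.
  - intros x y Hx Hxy. eapply wb_mono; eauto.
  - intros D s HD Hs Has. destruct (interpolation Hc _ _ Has) as [m [H1 H2]].
    destruct (H2 D s HD Hs (le_refl s)) as [d [Hd Hmd]].
    exists d; split; auto. eapply wb_mono; eauto.
Qed.
End OrderLemmas.
Arguments wb_le {P le}.
Arguments wb_mono {P le}.
Arguments directed_ext {P le}.
Arguments is_sup_ext {P le}.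
Arguments dir_list {P le}.
Arguments interpolation {P le}.
Arguments wb_scott_open {P le}.


(** * Zorn-type lemma: minimal elements *)
Section Zorn.
Variable T : Type.
Variable C : (T -> Prop) -> Prop.
Definition chainS (ch : (T -> Prop) -> Prop) :=
  forall A B, ch A -> ch B -> subset A B \/ subset B A.
Definition interS (ch : (T -> Prop) -> Prop) : T -> Prop := fun x => forall A, ch A -> A x.
Hypothesis Cchain : forall ch, (forall A, ch A -> C A) -> chainS ch -> (exists A, ch A) -> C (interS ch).
Variable A0 : T -> Prop.
Hypothesis HA0 : C A0.

Definition strictly_below (A : T -> Prop) := exists B, C B /\ subset B A /\ ~ subset A B.

Definition g (A : T -> Prop) : T -> Prop :=
  match excluded_middle_informative (strictly_below A) with
  | left h => proj1_sig (constructive_indefinite_description _ h)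
  | right _ => A
  end.

Lemma g_prop A : (C A -> C (g A)) /\ subset (g A) A /\ (strictly_below A -> ~ subset A (g A)).
Proof.
  unfold g. destruct (excluded_middle_informative (strictly_below A)) as [h|h].
  - destruct (constructive_indefinite_description _ h) as [B [HB [H1 H2]]]; simpl. auto.
  - split; auto. split. intros x; auto. intros h'; contradiction.
Qed.

Inductive tower : (T -> Prop) -> Prop :=
| tw0 : tower A0
| twS : forall A, tower A -> tower (g A)
| twL : forall ch, (forall A, ch A -> tower A) -> chainS ch -> (exists A, ch A) -> tower (interS ch).

Lemma tower_C A : tower A -> C A.
Proof.
  induction 1. auto. apply g_prop; auto. apply Cchain; auto.
Qed.

Lemma tower_sub A : tower A -> subset A A0.
Proof.
  induction 1. intros x; auto.
  intros x Hx. apply IHtower, (proj1 (proj2 (g_prop A))); auto.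
  destruct H2 as [B HB]. intros x Hx. apply (H0 B HB), Hx, HB.
Qed.

Definition normal (c : T -> Prop) := forall x, tower x -> subset c x -> ~ subset x c -> subset c (g x).

Lemma normal_l1 c : tower c -> normal c -> forall x, tower x -> subset c x \/ subset x (g c).
Proof.
  intros Tc Nc x Tx. induction Tx as [| y Ty IH | ch Hch IH Hchain Hne].
  - left. apply tower_sub; auto.
  - destruct IH as [IH|IH].
    + destruct (classic (subset y c)) as [Hyc|Hyc].
      * right. rewrite (set_ext _ _ Hyc IH). apply (proj1 (proj2 (g_prop c))) || (intros z; auto).
      * left. apply Nc; auto.
    + right. intros z Hz. apply IH, (proj1 (proj2 (g_prop y))); auto.
  - destruct (classic (exists A, ch A /\ subset A (g c))) as [[A [HA HAg]]|Hn].
    + right. intros z Hz. apply HAg, Hz, HA.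
    + left. intros z Hz A HA. destruct (IH A HA) as [H|H]. apply H; auto.
      exfalso; apply Hn; eauto.
Qed.

Lemma all_normal c : tower c -> normal c.
Proof.
  intros Tc. induction Tc as [| d Td IH | ch Hch IH Hchain Hne].
  - intros x Tx H1 H2. exfalso; apply H2, tower_sub; auto.
  - intros x Tx H1 H2. destruct (normal_l1 _ Td IH x Tx) as [H|H]; [|contradiction].
    destruct (classic (subset x d)) as [Hxd|Hxd].
    + rewrite (set_ext _ _ Hxd H). intros z; auto.
    + intros z Hz. apply (IH x Tx H Hxd). apply (proj1 (proj2 (g_prop d))); auto.
  - intros x Tx H1 H2.
    assert (exists A, ch A /\ ~ subset x A) as [A [HA HxA]].
    { apply NNPP; intros Hn. apply H2. intros z Hz B HB.
      apply NNPP; intros Hb. apply Hn. exists B; split; [auto|]. intros Hs; apply Hb; auto. }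
    destruct (normal_l1 _ (Hch A HA) (IH A HA) x Tx) as [H|H].
    + intros z Hz. apply (IH A HA x Tx H HxA). apply Hz, HA.
    + exfalso. apply HxA. intros z Hz. apply (proj1 (proj2 (g_prop A))); auto.
Qed.

Lemma tower_chain : chainS tower.
Proof.
  intros x c Tx Tc. destruct (normal_l1 _ Tc (all_normal _ Tc) x Tx) as [H|H]; auto.
  left. intros z Hz. apply (proj1 (proj2 (g_prop c))); auto.
Qed.

Lemma zorn_min : exists M, C M /\ forall B, C B -> subset B M -> subset M B.
Proof.
  assert (TM : tower (interS tower)) by (apply twL; auto; exact tower_chain || eauto; exists A0; constructor).
  exists (interS tower). split. apply tower_C; auto.
  intros B HB HBM. apply NNPP; intros Hn.
  assert (Hs : strictly_below (interS tower)) by (exists B; auto).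
  apply (proj2 (proj2 (g_prop _)) Hs). intros z Hz. apply Hz. apply twS; auto.
Qed.
End Zorn.
Section Topo.
Variables (X : Type) (O : (X -> Prop) -> Prop).
Hypothesis HO : is_topology O.

Lemma O_ext U V : O U -> (forall x, U x <-> V x) -> O V.
Proof. intros HU H. replace V with U; auto. apply set_ext; intros x; apply H. Qed.

Lemma O_full : O (fun _ => True).
Proof. apply HO. Qed.

Lemma O_union (F : (X -> Prop) -> Prop) : (forall U, F U -> O U) -> O (fun x => exists U, F U /\ U x).
Proof. apply HO. Qed.

Lemma O_inter U V : O U -> O V -> O (fun x => U x /\ V x).
Proof. apply HO. Qed.

Lemma O_empty : O (fun _ => False).
Proof.
  apply O_ext with (fun x => exists U, (fun _ : X -> Prop => False) U /\ U x).
  apply O_union; intros U []. intros x; split. intros [U [[] _]]. intros [].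
Qed.

Lemma open_closed_compl U : O U -> closed O (fun x => ~ U x).
Proof. intros HU. unfold closed. apply O_ext with U; auto. intros x; split; auto. apply NNPP. Qed.

Lemma closure_closed A : closed O (closure O A).
Proof.
  unfold closed. apply O_ext with (fun x => exists U, (fun U => exists C, closed O C /\ subset A C /\ forall y, U y <-> ~ C y) U /\ U x).
  - apply O_union. intros U [C [HC [_ HU]]]. apply O_ext with (fun x => ~ C x); auto. intros y; split; apply HU.
  - intros x; split.
    + intros [U [[C [HC [HAC HU]]] HUx]] Hcl. apply (proj1 (HU x) HUx). apply Hcl; auto.
    + intros Hn. unfold closure in Hn. apply not_all_ex_not in Hn as [C Hn].
      apply imply_to_and in Hn as [HC Hn]. apply imply_to_and in Hn as [HAC Hn].
      exists (fun y => ~ C y). split; auto. exists C; split; auto. split; auto. intros y; split; auto.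
Qed.

Lemma spec_refl x : spec_le O x x.
Proof. intros C _ H. apply H; auto. Qed.

Lemma spec_trans x y z : spec_le O x y -> spec_le O y z -> spec_le O x z.
Proof.
  intros H1 H2 C HC Hz. apply H1; auto. intros a ->. apply H2; auto.
Qed.

Lemma open_upper U x y : O U -> U x -> spec_le O x y -> U y.
Proof.
  intros HU Hx Hxy. apply NNPP; intros Hy.
  assert (Hc : closed O (fun z => ~ U z)) by (apply open_closed_compl; auto).
  apply (Hxy _ Hc); auto. intros a ->; auto.
Qed.

Lemma interior_open A : O (interior O A).
Proof.
  apply O_ext with (fun x => exists U, (fun U => O U /\ subset U A) U /\ U x).
  apply O_union. intros U [H _]; auto.
  intros x; split. intros [U [[H1 H2] H3]]. exists U; auto.
  intros [U [H1 [H2 H3]]]. exists U; auto.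
Qed.

Lemma interior_sub A x : interior O A x -> A x.
Proof. intros [U [_ [H1 H2]]]. auto. Qed.

Lemma open_sub_interior U A x : O U -> subset U A -> U x -> interior O A x.
Proof. intros; exists U; auto. Qed.

Definition sat (S : X -> Prop) : X -> Prop := fun y => exists x, S x /\ spec_le O x y.

Lemma sat_saturated S : saturated O (sat S).
Proof. intros x y [z [Hz Hzx]] Hxy. exists z; split; auto. eapply spec_trans; eauto. Qed.

Lemma sat_incl S : subset S (sat S).
Proof. intros x Hx. exists x; split; auto. apply spec_refl. Qed.

Lemma compact_sat S : compact O S -> compact O (sat S).
Proof.
  intros HS F HF Hcov. destruct (HS F HF) as [l [Hl1 Hl2]].
  - intros x Hx. apply Hcov, sat_incl; auto.
  - exists l; split; auto. intros y [x [Hx Hxy]]. destruct (Hl2 x Hx) as [U [HU HUx]].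
    exists U; split; auto. eapply open_upper; eauto.
Qed.

Lemma compact_union_list (Ls : list (X -> Prop)) : (forall N, In N Ls -> compact O N) ->
  compact O (fun x => exists N, In N Ls /\ N x).
Proof.
  induction Ls as [|N Ls IH]; intros HLs F HF Hcov.
  - exists nil. split. intros U []. intros x [N [[] _]].
  - destruct (HLs N (or_introl eq_refl) F HF) as [l1 [H11 H12]].
    { intros x Hx. apply Hcov. exists N; split; auto. left; auto. }
    destruct (IH (fun N' H => HLs N' (or_intror H)) F HF) as [l2 [H21 H22]].
    { intros x [N' [HN' Hx]]. apply Hcov. exists N'; split; auto. right; auto. }
    exists (l1 ++ l2). split.
    + intros U HU. apply in_app_or in HU as [HU|HU]; auto.
    + intros x [N' [[<-|HN'] Hx]].
      * destruct (H12 x Hx) as [U [HU HUx]]. exists U; split; auto. apply in_or_app; auto.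
      * destruct (H22 x) as [U [HU HUx]]. exists N'; auto. exists U; split; auto. apply in_or_app; auto.
Qed.

Lemma upset_in_KX x : in_KX O (upset O x).
Proof.
  split. exists x. apply spec_refl. split.
  - intros F HF Hcov. destruct (Hcov x (spec_refl x)) as [U [HU HUx]].
    exists (U :: nil). split. intros V [<-|[]]; auto.
    intros y Hy. exists U; split. left; auto. eapply open_upper; eauto.
  - intros y z Hy Hyz. eapply spec_trans; eauto.
Qed.

Definition Kup (x : X) : KX O := exist _ (upset O x) (upset_in_KX x).

Lemma Kle_refl (K : KX O) : Kle K K.
Proof. intros x; auto. Qed.
Lemma Kle_trans (K1 K2 K3 : KX O) : Kle K1 K2 -> Kle K2 K3 -> Kle K1 K3.
Proof. unfold Kle, subset; auto. Qed.

Lemma choose_list (A B : Type) (Pr : A -> B -> Prop) (l : list A) :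
  (forall a, In a l -> exists b, Pr a b) ->
  exists lb : list B, (forall b, In b lb -> exists a, In a l /\ Pr a b) /\ (forall a, In a l -> exists b, In b lb /\ Pr a b).
Proof.
  induction l as [|a l IH]; intros H.
  - exists nil; split. intros b []. intros a [].
  - destruct (H a (or_introl eq_refl)) as [b Hb].
    destruct IH as [lb [H1 H2]]. intros a' Ha'; apply H; right; auto.
    exists (b :: lb). split.
    + intros b' [<-|Hb']. exists a; split; auto. left; auto.
      destruct (H1 b' Hb') as [a' [? ?]]. exists a'; split; auto. right; auto.
    + intros a' [<-|Ha']. exists b; split; auto. left; auto.
      destruct (H2 a' Ha') as [b' [? ?]]. exists b'; split; auto. right; auto.
Qed.

Lemma lc_nbhd : locally_compact O -> forall K U, compact O K -> O U -> subset K U ->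
  exists Q, compact O Q /\ saturated O Q /\ subset K (interior O Q) /\ subset Q U.
Proof.
  intros Hlc K U HK HU HKU.
  set (F := fun V => O V /\ exists N, compact O N /\ subset V N /\ subset N U).
  destruct (HK F) as [l [Hl1 Hl2]].
  - intros V [H _]; auto.
  - intros x Hx. destruct (Hlc x U HU (HKU x Hx)) as [N [HN [[V [HV [HVN HVx]]] HNU]]].
    exists V; split; auto. split; auto. exists N; auto.
  - destruct (@choose_list _ _ (fun (V N : X -> Prop) => compact O N /\ subset V N /\ subset N U) l) as [Ns [HN1 HN2]].
    { intros V HV. destruct (Hl1 V HV) as [_ H]. auto. }
    exists (sat (fun x => exists N, In N Ns /\ N x)). split; [|split; [|split]].
    + apply compact_sat, compact_union_list. intros N HN. destruct (HN1 N HN) as [V [_ [H _]]]; auto.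
    + apply sat_saturated.
    + intros x Hx. destruct (Hl2 x Hx) as [V [HV HVx]]. destruct (HN2 V HV) as [N [HN [_ [HVN _]]]].
      exists V. split. apply (Hl1 V HV). split; auto.
      intros y Hy. apply sat_incl. exists N; auto.
    + intros y [x [[N [HN Hx]] Hxy]]. destruct (HN1 N HN) as [V [_ [_ [_ HNU]]]].
      eapply open_upper; eauto.
Qed.
End Topo.
Arguments O_ext {X O}.
Arguments O_full {X O}.
Arguments O_union {X O}.
Arguments O_inter {X O}.
Arguments O_empty {X O}.
Arguments open_closed_compl {X O}.
Arguments closure_closed {X O}.
Arguments spec_refl {X O}.
Arguments spec_trans {X O}.
Arguments open_upper {X O}.
Arguments interior_open {X O}.
Arguments interior_sub {X O}.
Arguments open_sub_interior {X O}.
Arguments sat {X O}.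
Arguments sat_saturated {X O}.
Arguments sat_incl {X O}.
Arguments compact_sat {X O}.
Arguments compact_union_list {X O}.
Arguments upset_in_KX {X O}.
Arguments Kup {X O}.
Arguments Kle_refl {X O}.
Arguments Kle_trans {X O}.
Arguments lc_nbhd {X O}.
Section KXlemmas.
Variables (X : Type) (O : (X -> Prop) -> Prop).
Hypothesis HO : is_topology O.
Hypothesis Hwf : well_filtered O.

Definition Iset (D : KX O -> Prop) : X -> Prop := fun x => forall K, D K -> Kset K x.

Lemma Kset_prop (K : KX O) : in_KX O (Kset K).
Proof. exact (proj2_sig K). Qed.

Lemma inter_in_KX (D : KX O -> Prop) : directed (@Kle X O) D -> in_KX O (Iset D).
Proof.
  intros HD. split; [|split].
  - apply NNPP; intros Hn.
    destruct (Hwf (fun _ => False) D (O_empty HO) HD) as [K [HK HKs]].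
    + intros x Hx. apply Hn; exists x; auto.
    + destruct (Kset_prop K) as [[x Hx] _]. apply (HKs x Hx).
  - intros F HF Hcov.
    destruct (Hwf (fun x => exists U, F U /\ U x) D (O_union HO F HF) HD Hcov) as [K [HK HKs]].
    destruct (proj1 (proj2 (Kset_prop K)) F HF HKs) as [l [Hl1 Hl2]].
    exists l; split; auto. intros x Hx. apply Hl2, Hx, HK.
  - intros x y Hx Hxy K HK. apply (proj2 (proj2 (Kset_prop K))) with x; auto.
Qed.

Definition Kinter (D : KX O -> Prop) (HD : directed (@Kle X O) D) : KX O := exist _ (Iset D) (inter_in_KX D HD).

Lemma Kinter_sup D (HD : directed (@Kle X O) D) : is_sup (@Kle X O) D (Kinter D HD).
Proof.
  split. intros K HK x Hx. apply Hx, HK.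
  intros t Ht x Hx K HK. apply (Ht K HK), Hx.
Qed.

Lemma K_dcpo : directed_complete (@Kle X O).
Proof. intros D HD. exists (Kinter D HD). apply Kinter_sup. Qed.

Lemma sup_inter D s : directed (@Kle X O) D -> is_sup (@Kle X O) D s -> subset (Iset D) (Kset s).
Proof. intros HD [_ Hs]. apply (Hs (Kinter D HD)). apply Kinter_sup. Qed.

Lemma wf_sup D s U : directed (@Kle X O) D -> is_sup (@Kle X O) D s -> O U -> subset (Kset s) U ->
  exists K, D K /\ subset (Kset K) U.
Proof.
  intros HD Hs HU HsU. apply Hwf; auto. intros x Hx. apply HsU. apply (sup_inter D s HD Hs); auto.
Qed.

Lemma Q_easy (K1 K2 : KX O) : subset (Kset K2) (interior O (Kset K1)) -> way_below (@Kle X O) K1 K2.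
Proof.
  intros H D s HD Hs Hle.
  destruct (wf_sup D s (interior O (Kset K1)) HD Hs (interior_open HO _)) as [K [HK HKs]].
  - intros x Hx. apply H, Hle, Hx.
  - exists K; split; auto. intros x Hx. apply (interior_sub (O:=O)), HKs, Hx.
Qed.

Hypothesis Hlc : locally_compact O.

Definition Dn (K2 : KX O) : KX O -> Prop := fun K => subset (Kset K2) (interior O (Kset K)).

Lemma mkK (K2 : KX O) (Q : X -> Prop) : compact O Q -> saturated O Q -> subset (Kset K2) Q -> { K : KX O | Kset K = Q }.
Proof.
  intros H1 H2 H3. assert (Hin : in_KX O Q).
  { split; auto. destruct (Kset_prop K2) as [[x Hx] _]. exists x; auto. }
  exists (exist _ Q Hin). reflexivity.
Qed.

Lemma Dn_dir K2 : directed (@Kle X O) (Dn K2).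
Proof.
  split.
  - destruct (lc_nbhd Hlc (Kset K2) (fun _ => True) (proj1 (proj2 (Kset_prop K2))) (O_full HO)) as [Q [HQ1 [HQ2 [HQ3 _]]]].
    intros x; auto.
    destruct (mkK K2 Q HQ1 HQ2) as [K HK]. intros x Hx; apply (interior_sub (O:=O)), HQ3; auto.
    exists K. unfold Dn. rewrite HK; auto.
  - intros a b Ha Hb.
    destruct (lc_nbhd Hlc (Kset K2) (fun x => interior O (Kset a) x /\ interior O (Kset b) x)
      (proj1 (proj2 (Kset_prop K2))) (O_inter HO _ _ (interior_open HO _) (interior_open HO _))) as [Q [HQ1 [HQ2 [HQ3 HQ4]]]].
    intros x Hx; split; auto.
    destruct (mkK K2 Q HQ1 HQ2) as [K HK]. intros x Hx; apply (interior_sub (O:=O)), HQ3; auto.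
    exists K. unfold Dn, Kle. rewrite HK. split; auto.
    split; intros x Hx; apply (interior_sub (O:=O)), HQ4; auto.
Qed.

Lemma Dn_sup K2 : is_sup (@Kle X O) (Dn K2) K2.
Proof.
  split.
  - intros K HK x Hx. apply (interior_sub (O:=O)), HK; auto.
  - intros t Ht y Hy. apply NNPP; intros Hny.
    set (U := fun z => ~ closure O (fun w => w = y) z).
    assert (HU : O U) by apply (closure_closed HO).
    assert (HKU : subset (Kset K2) U).
    { intros x Hx Hcl. apply Hny. apply (proj2 (proj2 (Kset_prop K2))) with x; auto. }
    destruct (lc_nbhd Hlc (Kset K2) U (proj1 (proj2 (Kset_prop K2))) HU HKU) as [Q [HQ1 [HQ2 [HQ3 HQ4]]]].
    destruct (mkK K2 Q HQ1 HQ2) as [K HK]. intros x Hx; apply (interior_sub (O:=O)), HQ3; auto.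
    assert (HDK : Dn K2 K) by (unfold Dn; rewrite HK; auto).
    specialize (Ht K HDK y Hy). rewrite HK in Ht. apply (HQ4 y Ht). intros C _ H; apply H; auto.
Qed.

Lemma Q_hard (K1 K2 : KX O) : way_below (@Kle X O) K1 K2 -> subset (Kset K2) (interior O (Kset K1)).
Proof.
  intros H. destruct (H (Dn K2) K2 (Dn_dir K2) (Dn_sup K2) (Kle_refl K2)) as [K [HK HKK]].
  intros x Hx. destruct (HK x Hx) as [U [HU [HUK HUx]]]. exists U; split; auto. split; auto.
  intros z Hz. apply HKK, HUK; auto.
Qed.

Lemma lc_propQ : property_Q O.
Proof. intros K1 K2; split. apply Q_hard. apply Q_easy. Qed.

Lemma lc_cont : continuous_poset (@Kle X O).
Proof.
  split. apply K_dcpo. intros K2. split.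
  - apply directed_ext with (Dn K2). intros u; split. apply Q_easy. apply Q_hard. apply Dn_dir.
  - apply is_sup_ext with (Dn K2). intros u; split. apply Q_easy. apply Q_hard. apply Dn_sup.
Qed.
End KXlemmas.
Arguments Iset {X O}.
Arguments Kset_prop {X O}.
Arguments inter_in_KX {X O}.
Arguments Kinter {X O}.
Arguments Kinter_sup {X O}.
Arguments K_dcpo {X O}.
Arguments sup_inter {X O}.
Arguments wf_sup {X O}.
Arguments Q_easy {X O}.
Arguments Dn {X O}.
Arguments mkK {X O}.
Arguments Dn_dir {X O}.
Arguments Dn_sup {X O}.
Arguments Q_hard {X O}.
Arguments lc_propQ {X O}.
Arguments lc_cont {X O}.
Section Impl.
Variables (X : Type) (O : (X -> Prop) -> Prop).
Hypothesis HO : is_topology O.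
Hypothesis Hwf : well_filtered O.
Local Notation KL := (@Kle X O).

Lemma scott_of_uv (V : KX O -> Prop) : upper_vietoris_open V -> scott_open KL V.
Proof.
  intros [F [HF HV]]. split.
  - intros x y Hx Hxy. apply HV in Hx as [U [HU HxU]]. apply HV. exists U; split; auto.
    intros z Hz. apply HxU, Hxy, Hz.
  - intros D s HD Hs Hsv. apply HV in Hsv as [U [HU HsU]].
    destruct (wf_sup HO Hwf D s U HD Hs (HF U HU) HsU) as [K [HK HKU]].
    exists K; split; auto. apply HV. exists U; auto.
Qed.

Lemma uv_of_scott (V : KX O -> Prop) : continuous_poset KL -> property_Q O -> scott_open KL V -> upper_vietoris_open V.
Proof.
  intros Hc HQ [Hup Hsc].
  exists (fun U => exists K, V K /\ U = interior O (Kset K)). split.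
  - intros U [K [_ ->]]. apply interior_open; auto.
  - intros K. split.
    + intros HK. destruct (Hc) as [_ Hc']. destruct (Hc' K) as [HD Hs].
      destruct (Hsc _ K HD Hs HK) as [K' [HK'1 HK'2]].
      exists (interior O (Kset K')). split. exists K'; auto.
      apply HQ; auto.
    + intros [U [[K' [HK' ->]] HKU]]. apply Hup with K'; auto.
      intros z Hz. apply (interior_sub (O:=O)), HKU; auto.
Qed.

Lemma xi_of_eq : (forall V : KX O -> Prop, upper_vietoris_open V <-> scott_open KL V) -> xi_continuous O.
Proof.
  intros Heq V HV. apply Heq in HV as [F [HF HV]].
  apply O_ext with (fun x => exists U, F U /\ U x). apply O_union; auto.
  intros x; split.
  - intros [U [HU Hx]]. exists (Kup x). split. intros y; simpl; split; auto.
    apply HV. exists U; split; auto. intros y Hy. apply (open_upper (O:=O)) with x; auto.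
  - intros [K [HK HVK]]. apply HV in HVK as [U [HU HKU]]. exists U; split; auto.
    apply HKU, HK, spec_refl.
Qed.

Lemma approx : continuous_poset KL -> forall U x, O U -> U x ->
  exists K, way_below KL K (Kup x) /\ subset (Kset K) U.
Proof.
  intros [_ Hc] U x HU Hx. destruct (Hc (Kup x)) as [HD Hs].
  destruct (wf_sup HO Hwf _ _ U HD Hs HU) as [K [HK HKU]].
  - intros y Hy. eapply (open_upper (O:=O)); eauto.
  - exists K; auto.
Qed.

Lemma lc_of_4 : continuous_poset KL -> property_Q O -> locally_compact O.
Proof.
  intros Hc HQ x U HU Hx. destruct (approx Hc U x HU Hx) as [K [HK HKU]].
  exists (Kset K). split. apply (proj2_sig K). split; auto.
  apply HQ in HK. apply HK. apply spec_refl.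
Qed.

Lemma lc_of_3 : continuous_poset KL -> xi_continuous O -> locally_compact O.
Proof.
  intros Hc Hxi x U HU Hx. destruct (approx Hc U x HU Hx) as [K [HK HKU]].
  exists (Kset K). split. apply (proj2_sig K). split; auto.
  specialize (Hxi _ (wb_scott_open (@Kle_refl X O) (@Kle_trans X O) Hc K)).
  exists (fun x => exists K0 : KX O, (forall y, Kset K0 y <-> upset O x y) /\ way_below KL K K0).
  split; auto. split.
  - intros y [K0 [HK0 HKK0]]. apply (wb_le (@Kle_refl X O)) in HKK0.
    apply HKK0, HK0, spec_refl.
  - exists (Kup x). split; auto. intros y; simpl; split; auto.
Qed.

Local Notation OL := (@OXle X O).
Lemma OXle_refl (a : OX O) : OL a a.
Proof. intros x; auto. Qed.
Lemma OXle_trans (a b c : OX O) : OL a b -> OL b c -> OL a c.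
Proof. unfold OXle, subset; auto. Qed.

Definition val (a : OX O) : X -> Prop := proj1_sig a.

Lemma OX_union_open (D : OX O -> Prop) : O (fun x => exists Z, D Z /\ val Z x).
Proof.
  apply O_ext with (fun x => exists U, (fun U => exists Z, D Z /\ U = val Z) U /\ U x).
  apply O_union; auto. intros U [Z [_ ->]]. apply (proj2_sig Z).
  intros x; split. intros [U [[Z [HZ ->]] Hx]]; eauto. intros [Z [HZ Hx]]. exists (val Z); eauto.
Qed.

Definition unionOX (D : OX O -> Prop) : OX O := exist _ _ (OX_union_open D).

Lemma unionOX_sup D : is_sup OL D (unionOX D).
Proof.
  split. intros Z HZ x Hx. exists Z; auto.
  intros t Ht x [Z [HZ Hx]]. apply (Ht Z HZ), Hx.
Qed.

Lemma OX_sup_sub D s : is_sup OL D s -> subset (val s) (fun x => exists Z, D Z /\ val Z x).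
Proof. intros [_ H]. apply (H (unionOX D)). apply unionOX_sup. Qed.

Lemma wbO_cover (a b : OX O) : way_below OL a b -> forall D, directed OL D ->
  subset (val b) (fun x => exists Z, D Z /\ val Z x) -> exists Z, D Z /\ subset (val a) (val Z).
Proof.
  intros H D HD Hb. apply (H D (unionOX D) HD (unionOX_sup D) Hb).
Qed.

Lemma compact_wb (a b : OX O) (N : X -> Prop) : compact O N -> subset (val a) N -> subset N (val b) -> way_below OL a b.
Proof.
  intros HN HaN HNb D s HD Hs Hbs.
  set (F := fun U => exists Z, D Z /\ U = val Z).
  destruct (HN F) as [l [Hl1 Hl2]].
  - intros U [Z [_ ->]]. apply (proj2_sig Z).
  - intros x Hx. destruct (OX_sup_sub D s Hs x (Hbs x (HNb x Hx))) as [Z [HZ HZx]].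
    exists (val Z); split; auto. exists Z; auto.
  - destruct (@choose_list _ _ (fun U Z => D Z /\ U = val Z) l) as [lz [Hz1 Hz2]].
    { intros U HU. apply Hl1; auto. }
    destruct (dir_list OXle_refl OXle_trans D HD lz) as [c [Hc Hc']].
    { intros Z HZ. destruct (Hz1 Z HZ) as [U [_ [? _]]]; auto. }
    exists c; split; auto. intros x Hx. destruct (Hl2 x (HaN x Hx)) as [U [HU HUx]].
    destruct (Hz2 U HU) as [Z [HZ [_ ->]]]. apply (Hc' Z HZ), HUx.
Qed.

Lemma cc_of_lc : locally_compact O -> core_compact O.
Proof.
  intros Hlc. split.
  - intros D HD. exists (unionOX D). apply unionOX_sup.
  - intros U. split; [split|].
    + assert (H0 : O (fun _ : X => False)) by (apply O_empty; auto).
      exists (exist _ _ H0). apply compact_wb with (fun _ => False).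
      intros F _ _. exists nil. split. intros V []. intros x [].
      intros x []. intros x [].
    + intros a b Ha Hb.
      assert (H0 : O (fun x => val a x \/ val b x)).
      { apply O_ext with (fun x => exists V, (fun V => V = val a \/ V = val b) V /\ V x).
        apply O_union; auto. intros V [->| ->]; apply (proj2_sig _).
        intros x; split. intros [V [[->| ->] Hx]]; auto. intros [Hx|Hx]; eauto. }
      exists (exist _ _ H0). split; [|split; intros x Hx; simpl; auto].
      intros D s HD Hs Hus. destruct (Ha D s HD Hs Hus) as [d1 [Hd1 H1]].
      destruct (Hb D s HD Hs Hus) as [d2 [Hd2 H2]].
      destruct (proj2 HD d1 d2 Hd1 Hd2) as [d3 [Hd3 [H13 H23]]].
      exists d3; split; auto. intros x [Hx|Hx]; auto.
    + split. intros a Ha. apply (wb_le OXle_refl); auto.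
      intros t Ht x Hx. destruct (Hlc x (val U) (proj2_sig U) Hx) as [N [HN [HNx HNU]]].
      pose (V := exist (fun W => O W) (interior O N) (interior_open HO N) : OX O).
      apply (Ht V). apply compact_wb with N; auto. intros y; apply (interior_sub (O:=O)).
      exact HNx.
Qed.
End Impl.
Arguments scott_of_uv {X O}.
Arguments uv_of_scott {X O}.
Arguments xi_of_eq {X O}.
Arguments approx {X O}.
Arguments lc_of_4 {X O}.
Arguments lc_of_3 {X O}.
Arguments OXle_refl {X O}.
Arguments OXle_trans {X O}.
Arguments val {X O}.
Arguments OX_union_open {X O}.
Arguments unionOX {X O}.
Arguments unionOX_sup {X O}.
Arguments OX_sup_sub {X O}.
Arguments wbO_cover {X O}.
Arguments compact_wb {X O}.
Arguments cc_of_lc {X O}.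
Section CC.
Variables (X : Type) (O : (X -> Prop) -> Prop).
Hypothesis HO : is_topology O.
Hypothesis Hwf : well_filtered O.
Hypothesis Hcc : core_compact O.
Local Notation OL := (@OXle X O).

Lemma list_union_open (l : list (X -> Prop)) : (forall U, In U l -> O U) -> O (fun z => exists U, In U l /\ U z).
Proof. intros H. apply (O_union HO (fun U => In U l)); auto. Qed.

Lemma lc_of_cc : locally_compact O.
Proof.
  intros x U HU Hx.
  pose (Ub := exist (fun W => O W) U HU : OX O).
  destruct Hcc as [Hdc Hc].
  assert (HV : exists V, way_below OL V Ub /\ val V x).
  { destruct (Hc Ub) as [HD Hs]. apply (OX_sup_sub HO _ _ Hs x Hx). }
  destruct HV as [V [HVU HVx]].
  assert (Hst : forall p : {W : OX O | way_below OL V W}, exists q : {W : OX O | way_below OL V W},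
            way_below OL (proj1_sig q) (proj1_sig p)).
  { intros [W HW]. destruct (interpolation OXle_refl OXle_trans Hcc V W HW) as [m [H1 H2]].
    exists (exist _ m H1). exact H2. }
  pose (step := fun p => proj1_sig (constructive_indefinite_description _ (Hst p))).
  assert (Hstep : forall p, way_below OL (proj1_sig (step p)) (proj1_sig p)).
  { intros p. exact (proj2_sig (constructive_indefinite_description _ (Hst p))). }
  pose (c := fun n => proj1_sig (Nat.iter n step (exist _ Ub HVU))).
  assert (Hc1 : forall n, way_below OL (c (S n)) (c n)).
  { intros n. unfold c. simpl. apply Hstep. }
  assert (HcV : forall n, way_below OL V (c n)).
  { intros n. unfold c. apply proj2_sig. }
  assert (Hdec : forall n m, n <= m -> subset (val (c m)) (val (c n))).
  { intros n m Hnm; induction Hnm. intros y; auto. intros y Hy. apply IHHnm.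
    apply (wb_le OXle_refl _ _ (Hc1 m)); auto. }
  assert (Hup : forall n y z, val (c n) y -> spec_le O y z -> val (c n) z).
  { intros n y z Hy Hyz. apply (open_upper (O:=O)) with y; auto. apply (proj2_sig (c n)). }
  pose (K := fun y => forall n, val (c n) y).
  exists K. split; [|split].
  2:{ exists (val V). split. apply (proj2_sig V). split; auto.
      intros y Hy n. apply (wb_le OXle_refl _ _ (HcV n)); auto. }
  2:{ intros y Hy. apply (Hy 0). }
  intros F HF Hcov.
  pose (W := fun y => exists U0, F U0 /\ U0 y).
  assert (HW : O W) by (apply O_union; auto).
  assert (Hkey : exists n, subset (val (c n)) W).
  { apply NNPP; intros Hn.
    assert (Hn' : forall n, exists y, ~ W y /\ val (c n) y).
    { intros n. apply NNPP; intros H. apply Hn. exists n. intros y Hy. apply NNPP; intros Hy'. apply H; exists y; auto. }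
    pose (Cc := fun y => ~ W y).
    pose (Cfam := fun B => closed O B /\ subset B Cc /\ forall n, exists y, B y /\ val (c n) y).
    destruct (zorn_min X Cfam) with (A0 := Cc) as [A [[HAcl [HAC HAm]] HAmin]].
    - intros ch Hch Hchain [B0 HB0]. split; [|split].
      + unfold closed. apply O_ext with (fun z => exists U0, (fun U0 => exists B, ch B /\ U0 = fun w => ~ B w) U0 /\ U0 z).
        apply O_union; auto. intros U0 [B [HB ->]]. apply (Hch B HB).
        intros z; split.
        * intros [U0 [[B [HB ->]] Hz]] Hi. apply Hz, Hi, HB.
        * intros Hz. apply NNPP; intros Hn2. apply Hz. intros B HB. apply NNPP; intros HBz.
          apply Hn2. exists (fun w => ~ B w). split; auto. exists B; auto.
      + intros y Hy. apply (Hch B0 HB0), Hy, HB0.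
      + intros n. apply NNPP; intros Hn2.
        pose (Dfam := fun Z : OX O => exists B, ch B /\ val Z = fun w => ~ B w).
        assert (HDf : directed OL Dfam).
        { split.
          - exists (exist (fun W => O W) (fun w => ~ B0 w) (proj1 (Hch B0 HB0))). exists B0; auto.
          - intros Z1 Z2 [B1 [HB1 E1]] [B2 [HB2 E2]].
            destruct (Hchain B1 B2 HB1 HB2) as [H12|H21].
            + exists Z1. split. exists B1; auto. split. apply OXle_refl.
              intros w. change (val Z2 w -> val Z1 w). rewrite E1, E2. intros H1 H2; apply H1, H12, H2.
            + exists Z2. split. exists B2; auto. split. 2:apply OXle_refl.
              intros w. change (val Z1 w -> val Z2 w). rewrite E1, E2. intros H1 H2; apply H1, H21, H2. }
        destruct (wbO_cover HO _ _ (Hc1 n) Dfam HDf) as [Z [[B [HB E]] HZ]].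
        * intros y Hy. assert (Hny : ~ interS X ch y) by (intros Hi; apply Hn2; exists y; auto).
          apply NNPP; intros Hn3. apply Hny. intros B HB. apply NNPP; intros HBy. apply Hn3.
          exists (exist (fun W => O W) (fun w => ~ B w) (proj1 (Hch B HB))). split; auto. exists B; auto.
        * destruct (proj2 (proj2 (Hch B HB)) (S n)) as [y [HBy Hy]].
          specialize (HZ y Hy). rewrite E in HZ. auto.
    - split; [|split].
      + unfold closed. apply O_ext with W; auto. intros z; split; auto. intros H; apply NNPP; auto.
      + intros y; auto.
      + intros n. destruct (Hn' n) as [y [? ?]]; eauto.
    -
      assert (HP : forall O1, O O1 -> forall a, A a -> O1 a -> exists m, forall y, A y -> val (c m) y -> O1 y).
      { intros O1 HO1 a Ha Ha1. apply NNPP; intros Hn2.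
        assert (HA' : Cfam (fun y => A y /\ ~ O1 y)).
        { split; [|split].
          - unfold closed. apply O_ext with (fun y => exists U0, (fun U0 => U0 = (fun z => ~ A z) \/ U0 = O1) U0 /\ U0 y).
            apply O_union; auto. intros U0 [->| ->]; auto.
            intros y; split.
            + intros [U0 [[->| ->] Hy]] [H1 H2]; auto.
            + intros Hy. destruct (classic (A y)) as [HAy|HAy].
              * exists O1. split; auto. apply NNPP; intros H; apply Hy; auto.
              * exists (fun z => ~ A z). split; auto.
          - intros y [Hy _]. apply HAC; auto.
          - intros n. apply NNPP; intros H. apply Hn2. exists n. intros y Hy1 Hy2.
            apply NNPP; intros Hy3. apply H. exists y; auto. }
        assert (Hsub := HAmin _ HA' (fun y H => proj1 H)).
        destruct (Hsub a Ha) as [_ Hna]. auto. }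
      pose (d := fun k => proj1_sig (constructive_indefinite_description _ (HAm k))).
      assert (HdA : forall k, A (d k) /\ val (c k) (d k)).
      { intros k. exact (proj2_sig (constructive_indefinite_description _ (HAm k))). }
      pose (Q := fun j z => exists k, j <= k /\ spec_le O (d k) z).
      assert (HQ : forall j, in_KX O (Q j)).
      { intros j. split; [|split].
        - exists (d j). exists j. split; auto. apply spec_refl.
        - intros F' HF' Hcov'.
          destruct (Hcov' (d j)) as [U1 [HU1 HU1d]]. exists j; split; auto; apply spec_refl.
          destruct (HP U1 (HF' U1 HU1) (d j) (proj1 (HdA j)) HU1d) as [m Hm].
          destruct (@choose_list nat (X -> Prop) (fun k U0 => F' U0 /\ U0 (d k)) (seq j (m - j))) as [lu [Hu1 Hu2]].
          { intros k Hk. apply in_seq in Hk. apply Hcov'. exists k; split. lia. apply spec_refl. }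
          exists (U1 :: lu). split.
          + intros U0 [<-|HU0]; auto. destruct (Hu1 U0 HU0) as [k [_ [? _]]]; auto.
          + intros z [k [Hjk Hkz]]. destruct (Nat.le_gt_cases m k) as [Hmk|Hkm].
            * exists U1; split. left; auto. apply (open_upper (O:=O)) with (d k); auto.
              apply Hm. apply HdA. apply (Hdec m k Hmk). apply HdA.
            * destruct (Hu2 k) as [U0 [HU0 [HFU0 HU0d]]]. apply in_seq; lia.
              exists U0; split. right; auto. apply (open_upper (O:=O)) with (d k); auto.
        - intros y z [k [Hk Hky]] Hyz. exists k; split; auto. eapply spec_trans; eauto. }
      pose (Qk := fun j => exist (in_KX O) (Q j) (HQ j) : KX O).
      destruct (Hwf W (fun K0 => exists j, K0 = Qk j) HW) as [K0 [[j ->] HjW]].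
      + split. exists (Qk 0); eauto.
        intros a b [j1 ->] [j2 ->]. exists (Qk (max j1 j2)). split. eauto.
        split; intros z [k [Hk Hkz]]; exists k; split; auto; lia.
      + intros z Hz. apply Hcov. intros n. destruct (Hz (Qk n) (ex_intro _ n eq_refl)) as [k [Hk Hkz]].
        apply Hup with (d k); auto. apply (Hdec n k Hk). apply HdA.
      + apply (HAC (d j)). apply HdA. apply HjW. exists j; split; auto. apply spec_refl. }
  destruct Hkey as [n Hn].
  pose (Dfam := fun Z : OX O => exists l, (forall U0, In U0 l -> F U0) /\ val Z = fun z => exists U0, In U0 l /\ U0 z).
  assert (HDf : directed OL Dfam).
  { split.
    - exists (exist (fun W => O W) _ (list_union_open nil (fun U0 (H : In U0 nil) => match H with end))).
      exists nil. split; auto. intros U0 [].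
    - intros Z1 Z2 [l1 [H1 E1]] [l2 [H2 E2]].
      assert (Ho : forall U0, In U0 (l1 ++ l2) -> O U0).
      { intros U0 HU0. apply HF. apply in_app_or in HU0 as [?|?]; auto. }
      exists (exist (fun W => O W) _ (list_union_open (l1 ++ l2) Ho)). split.
      exists (l1 ++ l2). split; auto. intros U0 HU0. apply in_app_or in HU0 as [?|?]; auto.
      split; intros z; [change (val Z1 z -> exists U0, In U0 (l1 ++ l2) /\ U0 z); rewrite E1
                       |change (val Z2 z -> exists U0, In U0 (l1 ++ l2) /\ U0 z); rewrite E2];
        intros [U0 [HU0 Hz]]; exists U0; split; auto; apply in_or_app; auto. }
  destruct (wbO_cover HO _ _ (Hc1 n) Dfam HDf) as [Z [[l [Hl E]] HZ]].
  - intros y Hy. destruct (Hn y Hy) as [U0 [HU0 HU0y]].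
    assert (Ho : forall U1, In U1 (U0 :: nil) -> O U1). { intros U1 [<-|[]]; auto. }
    exists (exist (fun W => O W) _ (list_union_open (U0 :: nil) Ho)). split.
    + exists (U0 :: nil). split; auto. intros U1 [<-|[]]; auto.
    + exists U0; split; auto. left; auto.
  - exists l. split; auto. intros y Hy. specialize (HZ y (Hy (S n))). rewrite E in HZ. exact HZ.
Qed.
End CC.
Arguments list_union_open {X O}.
Arguments lc_of_cc {X O}.

Theorem mainTheorem1 (X : Type) (O : (X -> Prop) -> Prop)
  (HO : is_topology O) (HT0 : T0 O) (Hwf : well_filtered O) :
  let c1 := locally_compact O in
  let c2 := continuous_poset (Kle (O := O)) /\
            (forall V : KX O -> Prop, upper_vietoris_open V <-> scott_open (Kle (O := O)) V) in
  let c3 := continuous_poset (Kle (O := O)) /\ xi_continuous O in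
  let c4 := continuous_poset (Kle (O := O)) /\ property_Q O in
  let c5 := core_compact O in
  (c1 <-> c2) /\ (c1 <-> c3) /\ (c1 <-> c4) /\ (c1 <-> c5).
Proof.
  intros c1 c2 c3 c4 c5.
  assert (H12 : c1 -> c2).
  { intros Hlc. split. apply lc_cont; auto. intros V; split.
    apply scott_of_uv; auto. apply uv_of_scott; auto. apply lc_cont; auto. apply lc_propQ; auto. }
  assert (H23 : c2 -> c3).
  { intros [Hc Heq]. split; auto. apply xi_of_eq; auto. }
  assert (H31 : c3 -> c1).
  { intros [Hc Hxi]. apply lc_of_3; auto. }
  assert (H14 : c1 -> c4).
  { intros Hlc. split. apply lc_cont; auto. apply lc_propQ; auto. }
  assert (H41 : c4 -> c1).
  { intros [Hc HQ]. apply lc_of_4; auto. }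
  assert (H15 : c1 -> c5) by (intros; apply cc_of_lc; auto).
  assert (H51 : c5 -> c1) by (intros; apply lc_of_cc; auto).
  split; [|split; [|split]]; split; auto.
Qed.
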